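(* Let $\Psi$ map $\bar t\in S^*$ to $\Psi(\bar t)=\{(\bar t\circ a)\restriction n:\ n\in\omega,\ a \text{ an assignment}\}$. Then for every $\bar t\in S^*$, $\Psi(\bar t)$ is a perfect subtree of $2^{<\omega}$; $\Psi$ is surjective onto Sacks forcing; $\Psi$ preserves $\le$; and $\Psi$ preserves incompatibility. In particular $\Psi$ is a surjective complete embedding of $S^*$ into Sacks forcing.
   Context: Terms. Fix a set $X$ of variable symbols, each taking values in $\{0,1\}$. An $X$-term $t$ is given by a finite sequence of variables $(v_0,\dots,v_{l-1})$ ($l\ge0$) and a function $f:2^l\to2$; a variable $v$ is identified with the term $((v),\mathrm{id})$. An assignment is a function $a:X\to2$; it extends to terms by $t\circ a=f(v_0\circ a,\dots,v_{l-1}\circ a)$. A substitution $\phi$ maps each variable to an $X$-term; $t\circ\phi$ is the term obtained by replacing each variable $v$ in $t$ by $\phi(v)$, and for a family $\bar t=(t_i)$ of terms, $\bar t\circ\phi=(t_i\circ\phi)$; for a family $\bar t=(t_i)$, $\bar t\circ a=(t_i\circ a)$. Terms are identified modulo $t=^*s$ iff $t\circ a=s\circ a$ for all assignments $a$; all equalities of terms are meant modulo $=^*$. A term depends only on variables in $Y\subseteq X$ if it is $=^*$ to a term using only variables from $Y$. A term or variable $s$ is determined by terms $t_0,\dots,t_n$ if for all assignments $a,b$, $(t_i\circ a)_{i\le n}=(t_i\circ b)_{i\le n}$ implies $s\circ a=s\circ b$. Here $X=\{x_j:j\in\omega\}$. $S^*$ is the set of sequences $\bar t=(t_i)_{i\in\omega}$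 of terms such that (1) $t_i$ depends only on the variables $x_j$ with $j\le i$, and (2) each $x_j$ is determined by finitely many $t_i$. An element $\phi\in S^*$ is regarded as the substitution $x_i\mapsto\phi_i$. The order: $\bar t'\le\bar t$ iff there is $\phi\in S^*$ with $\bar t'=\bar t\circ\phi$. Sacks forcing is the set of perfect subtrees of $2^{<\omega}$ ordered by inclusion. *)

(* Defs.v *)
From mathcomp Require Import all_boot.
Set Implicit Arguments. Unset Strict Implicit. Unset Printing Implicit Defensive.

(** Variables are x_j, represented by j : nat. An assignment a : X -> 2. *)
Definition assignment := nat -> bool.

(** An X-term: a finite sequence of variables (v_0,...,v_{l-1}) and a
    function f : 2^l -> 2, here given on sequences of booleans (only its
    values on sequences of length l = size tvars matter). *)
Record term := Term { tvars : seq nat; tfun : seq bool -> bool }.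

Definition tvar (v : nat) : term := Term [:: v] (fun bs => head false bs).

Definition teval (t : term) (a : assignment) : bool := tfun t (map a (tvars t)).

Definition teq (t s : term) : Prop := forall a, teval t a = teval s a.

Definition tsubst (t : term) (phi : nat -> term) : term :=
  let vs := tvars t in
  Term (flatten [seq tvars (phi v) | v <- vs])
       (fun bs => tfun t [seq tfun (phi p.1) p.2
                         | p <- zip vs (reshape [seq size (tvars (phi v)) | v <- vs] bs)]).

Definition depends_only (t : term) (Y : nat -> Prop) : Prop :=
  exists s, (forall v, v \in tvars s -> Y v) /\ teq t s.

Definition determined_by (j : nat) (ts : nat -> term) (F : seq nat) : Prop :=
  forall a b : assignment,
    (forall i, i \in F -> teval (ts i) a = teval (ts i) b) -> a j = b j.

Definition in_Sstar (ts : nat -> term) : Prop :=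
  (forall i, depends_only (ts i) (fun j => j <= i)) /\
  (forall j, exists F : seq nat, determined_by j ts F).

Definition Sstar_le (ts' ts : nat -> term) : Prop :=
  exists phi, in_Sstar phi /\ forall i, teq (ts' i) (tsubst (ts i) phi).

Definition Sstar_incompatible (ts1 ts2 : nat -> term) : Prop :=
  ~ exists r, in_Sstar r /\ Sstar_le r ts1 /\ Sstar_le r ts2.

Definition btree := seq bool -> Prop.

Definition is_tree (T : btree) : Prop :=
  (exists s, T s) /\ (forall s n, T s -> T (take n s)).

Definition perfect_tree (T : btree) : Prop :=
  is_tree T /\
  forall s, T s -> exists u, T (s ++ u ++ [:: false]) /\ T (s ++ u ++ [:: true]).

Definition Sacks_le (T' T : btree) : Prop := forall s, T' s -> T s.

Definition Sacks_incompatible (T1 T2 : btree) : Prop :=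
  ~ exists T, perfect_tree T /\ Sacks_le T T1 /\ Sacks_le T T2.

Definition restr_eval (ts : nat -> term) (a : assignment) (n : nat) : seq bool :=
  [seq teval (ts i) a | i <- iota 0 n].

Definition Psi (ts : nat -> term) : btree :=
  fun s => exists (n : nat) (a : assignment), s = restr_eval ts a n.

(* Main.v *)
Require Import Defs.
From mathcomp Require Import all_boot.
From Stdlib Require Import Classical ClassicalEpsilon.
Set Implicit Arguments. Unset Strict Implicit. Unset Printing Implicit Defensive.

Definition mkterm (i : nat) (f : assignment -> bool) : term :=
  Term (iota 0 i.+1) (fun bs => f (fun k => nth false bs k)).

Lemma nth_map_iota (a : assignment) n k : k < n -> nth false (map a (iota 0 n)) k = a k.
Proof. by move=> kn; rewrite (nth_map 0) ?size_iota // nth_iota. Qed.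

Definition dep_le (f : assignment -> bool) (i : nat) :=
  forall a b : assignment, (forall k, k <= i -> a k = b k) -> f a = f b.

Lemma teval_mkterm i f a : dep_le f i -> teval (mkterm i f) a = f a.
Proof. by move=> df; rewrite /teval; apply: df => k ki; exact: nth_map_iota. Qed.

Lemma mkterm_dep i f : depends_only (mkterm i f) (fun j => j <= i).
Proof. by exists (mkterm i f); split => // v; rewrite -[tvars _]/(iota 0 i.+1) mem_iota add0n ltnS. Qed.

Lemma teval_dep t i a b : depends_only t (fun j => j <= i) ->
  (forall k, k <= i -> a k = b k) -> teval t a = teval t b.
Proof.
move=> [s [Hs Hq]] ab; rewrite !Hq /teval; congr (tfun s _).
by apply/eq_in_map => v /Hs; apply: ab.
Qed.

Lemma teval_tsubst t phi a : teval (tsubst t phi) a = teval t (fun v => teval (phi v) a).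
Proof.
rewrite /teval /tsubst /=; congr (tfun t _).
elim: (tvars t) => //= v vs IH.
by rewrite map_cat -(size_map a) take_size_cat // drop_size_cat //= IH.
Qed.

Definition restr_nth ts a n i : i < n -> nth false (restr_eval ts a n) i = teval (ts i) a.
Proof. by move=> lt; rewrite /restr_eval (nth_map 0) ?size_iota // nth_iota. Qed.

Lemma size_restr ts a n : size (restr_eval ts a n) = n.
Proof. by rewrite size_map size_iota. Qed.

Lemma restr_eqP ts a b n : restr_eval ts a n = restr_eval ts b n <->
  (forall i, i < n -> teval (ts i) a = teval (ts i) b).
Proof.
split=> [E i lt|E]; first by rewrite -!(restr_nth _ _ lt) E.
by apply/eq_in_map => i; rewrite mem_iota add0n => /E.
Qed.

Lemma restr_S ts a n : restr_eval ts a n.+1 = rcons (restr_eval ts a n) (teval (ts n) a).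
Proof. by rewrite /restr_eval -addn1 iotaD map_cat cats1. Qed.

Lemma take_restr ts a n m : take m (restr_eval ts a n) = restr_eval ts a (minn m n).
Proof. by rewrite /restr_eval -map_take take_iota. Qed.

Lemma restr_eq2P ts ts' a b n : restr_eval ts a n = restr_eval ts' b n <->
  (forall i, i < n -> teval (ts i) a = teval (ts' i) b).
Proof.
split=> [E i lt|E]; first by rewrite -(restr_nth ts a lt) -(restr_nth ts' b lt) E.
by apply/eq_in_map => i; rewrite mem_iota add0n => /E.
Qed.


Lemma part1 ts : in_Sstar ts -> perfect_tree (Psi ts).
Proof.
move=> [Hdep Hdet]; split.
  split; first by exists [::], 0, (fun _ => false).
  by move=> s m [n [a ->]]; exists (minn m n), a; rewrite take_restr.
move=> s [n [a ->]]; apply: NNPP => Hno.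
pose a' : assignment := fun k => if k == n then ~~ a n else a k.
have E0 : restr_eval ts a' n = restr_eval ts a n.
  apply/restr_eqP => i lt; apply: teval_dep (Hdep i) _ => k ki.
  by rewrite /a' ifN // neq_ltn (leq_ltn_trans ki lt).
have Ed : forall d, restr_eval ts a' (n + d) = restr_eval ts a (n + d).
  elim=> [|d IH]; first by rewrite addn0.
  have P1 : Psi ts (rcons (restr_eval ts a (n + d)) (teval (ts (n + d)) a')).
    by exists (n + d).+1, a'; rewrite restr_S IH.
  have P2 : Psi ts (rcons (restr_eval ts a (n + d)) (teval (ts (n + d)) a)).
    by exists (n + d).+1, a; rewrite restr_S.
  rewrite addnS !restr_S IH; congr rcons.
  move: P1 P2; set p := restr_eval ts a (n + d).
  have Hp : p = restr_eval ts a n ++ drop n p.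
    by rewrite -{1}(cat_take_drop n p) take_restr (minn_idPl (leq_addr d n)).
  move: (teval (ts (n + d)) a') (teval (ts (n + d)) a) => x y.
  case: x; case: y => // P1 P2; case: Hno; exists (drop n p); rewrite !catA -!Hp !cats1.
    by split.
  by split.
have Ea : forall i, teval (ts i) a' = teval (ts i) a.
  move=> i; move: (Ed i.+1) => /restr_eqP; apply; rewrite addnS ltnS; exact: leq_addl.
case: (Hdet n) => F HF.
have := HF a' a (fun i _ => Ea i); rewrite /a' eqxx; by case: (a n).
Qed.


Definition dec (P : Prop) : bool := if excluded_middle_informative P then true else false.
Lemma decP P : reflect P (dec P).
Proof. by rewrite /dec; case: excluded_middle_informative => h; constructor. Qed.

Section Branch.
Variable T : btree.
Variable H : nat -> nat.
Hypothesis PT : perfect_tree T.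

Definition splitb (s : seq bool) := dec (T (rcons s false)) && dec (T (rcons s true)).
Definition cond (p : seq bool * nat) := splitb p.1 && (H p.2 <= size p.1).
Definition step (a : assignment) (p : seq bool * nat) : bool * nat :=
  if cond p then (a p.2, p.2.+1) else (dec (T (rcons p.1 true)), p.2).

Fixpoint st (a : assignment) (i : nat) : seq bool * nat :=
  match i with 0 => ([::], 0)
  | i'.+1 => let p := st a i' in (rcons p.1 (step a p).1, (step a p).2) end.

Definition bitf a i := (step a (st a i)).1.
Definition cnt a i := (st a i).2.

Lemma st_S a i : st a i.+1 = (rcons (st a i).1 (bitf a i), (step a (st a i)).2).
Proof. by []. Qed.

Lemma size_st a i : size (st a i).1 = i.
Proof. by elim: i => //= i IH; rewrite size_rcons IH. Qed.

Lemma st_map a n : (st a n).1 = [seq bitf a i | i <- iota 0 n].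
Proof. by elim: n => // n IH; rewrite st_S -addn1 iotaD map_cat cats1 -IH. Qed.

Lemma cnt_S a i : cnt a i.+1 = if cond (st a i) then (cnt a i).+1 else cnt a i.
Proof. by rewrite /cnt /= /step; case: ifP. Qed.

Lemma cnt_mono a i j : i <= j -> cnt a i <= cnt a j.
Proof.
move/subnKC <-; elim: (j - i) => [|d IH]; first by rewrite addn0.
rewrite addnS cnt_S; case: ifP => // _; exact: leq_trans IH (leqnSn _).
Qed.

Lemma cnt_le a i : cnt a i <= i.
Proof. by elim: i => // i IH; rewrite cnt_S; case: ifP => _; [|apply: leq_trans IH _]. Qed.

Lemma st_dep a b i : (forall k, k < cnt a i -> a k = b k) -> st a i = st b i.
Proof.
elim: i => // i IH ab.
have ab' : forall k, k < cnt a i -> a k = b k.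
  by move=> k lt; apply: ab; apply: leq_trans lt (cnt_mono _ (leqnSn i)).
have E := IH ab'; rewrite /= -E /step; case C: cond => //.
by rewrite ab // cnt_S C.
Qed.

Lemma bitf_dep i : dep_le (fun a => bitf a i) i.
Proof.
move=> a b ab.
have E : st a i.+1 = st b i.+1.
  by apply: st_dep => k lt; apply: ab; rewrite -ltnS; apply: leq_trans lt (cnt_le _ _).
by move: E; rewrite !st_S => -[/rcons_inj [_ ->]].
Qed.

Lemma st_inv a b i : (st a i).1 = (st b i).1 ->
  cnt a i = cnt b i /\ (forall k, k < cnt a i -> a k = b k).
Proof.
elim: i => // i IH; rewrite !st_S /= => /rcons_inj [E1 E2].
have [Ec Ek] := IH E1; rewrite !cnt_S.
have Est : st b i = st a i.
  by move: E1 Ec; rewrite /cnt; case: (st a i) => ? ?; case: (st b i) => ? ? /= -> ->.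
move: E2; rewrite /bitf /step Est -Ec; case: ifP => //= _ E2.
split=> // k; rewrite ltnS leq_eqVlt => /orP [/eqP -> //|]; exact: Ek.
Qed.


Lemma T_take s n : T s -> T (take n s).
Proof. by case: PT => [[_ h] _]; apply: h. Qed.

Lemma T_child s : T s -> T (rcons s true) \/ T (rcons s false).
Proof.
case: PT => _ hp /hp [u [h0 h1]]; case: u h0 h1 => [|c u] h0 h1.
  by left; rewrite -cats1.
have := T_take (size s).+1 h0; rewrite take_cat ltnNge leqnSn /= subSnn /= cats1.
rewrite take0 cats1; clear h0 h1; move=> h; by case: c h => h; [left|right].
Qed.

Lemma T_nil : T [::].
Proof. by case: PT => [[[s h] _] _]; move: (T_take 0 h); rewrite take0. Qed.

Lemma st_T a i : T (st a i).1.
Proof.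
elim: i => [|i IH]; first exact: T_nil.
rewrite st_S /= /bitf /step; case: ifP => [/andP [/andP [/decP h0 /decP h1] _]|_] /=.
  by case: (a _).
by case: decP => // hn; case: (T_child IH).
Qed.

Definition sbranch (s : seq bool) := dec (T (rcons s true)).

Lemma T_nosplit s b : T (rcons s b) -> ~~ splitb s -> sbranch s = b.
Proof.
rewrite /splitb /sbranch; case: b => h; rewrite (introT (decP _) h) //.
by case: (dec _).
Qed.

Lemma st_surj : (forall c, H c = 0) -> forall s, T s -> exists a, (st a (size s)).1 = s.
Proof.
move=> H0; elim/last_ind => [|s c IH] Ts; first by exists (fun _ => false).
have Ts' : T s by move: (T_take (size s) Ts); rewrite -cats1 take_size_cat.
have [a Ea] := IH Ts'; rewrite size_rcons.
case Sp: (splitb s).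
  pose a' : assignment := fun k => if k == cnt a (size s) then c else a k.
  have E : st a' (size s) = st a (size s).
    symmetry; apply: st_dep => k lt; by rewrite /a' (ltn_eqF lt).
  exists a'; rewrite st_S /bitf E /step /cond Ea Sp H0 /= -[(st a (size s)).2]/(cnt a (size s)).
  by rewrite /a' eqxx.
exists a; rewrite st_S /bitf /step /cond Ea Sp /= -/(sbranch s) (T_nosplit Ts) ?Sp //.
Qed.

Lemma T_prefix s u d : T (s ++ u) -> d <= size u -> T (s ++ take d u).
Proof.
move=> h du; move: (T_take (size s + d) h).
by rewrite take_cat ltnNge leq_addr /= addKn.
Qed.

Lemma consume a c i : cnt a i = c -> exists i', c < cnt a i'.
Proof.
move=> Ci; set i1 := maxn i (H c).
case: (ltnP c (cnt a i1)) => [lt|le]; first by exists i1.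
have E1 : cnt a i1 = c.
  by apply/anti_leq; rewrite le -{1}Ci cnt_mono // leq_maxl.
set s := (st a i1).1.
have [u [h0 h1]] := (proj2 PT) s (st_T a i1).
have Tsu : T (s ++ u).
  by have := T_prefix (d := size u) h0; rewrite size_cat leq_addr take_size_cat //; apply.
have Hc : forall d, H c <= size (st a (i1 + d)).1.
  by move=> d; rewrite size_st; apply: leq_trans (leq_maxr i _) (leq_addr _ _).
have claim : forall d, d <= size u -> (exists i', c < cnt a i') \/
   ((st a (i1 + d)).1 = s ++ take d u /\ cnt a (i1 + d) = c).
  elim=> [|d IH] du; first by right; rewrite take0 cats0 addn0.
  case: (IH (ltnW du)) => [//|[E C]]; first by left.
  case Cd: (cond (st a (i1 + d))).
    by left; exists (i1 + d).+1; rewrite cnt_S Cd C.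
  right; rewrite addnS cnt_S Cd C; split => //.
  have Tn : T (rcons (s ++ take d u) (nth false u d)).
    by rewrite rcons_cat -take_nth //; apply: T_prefix du.
  have nsp : ~~ splitb (st a (i1 + d)).1.
    by move: Cd; rewrite /cond -[(st a (i1 + d)).2]/(cnt a (i1 + d)) C (Hc d) andbT => ->.
  rewrite st_S /bitf /step Cd /= -/(sbranch _) E (T_nosplit Tn) -?E //.
  by rewrite E rcons_cat -take_nth.
case: (claim (size u) (leqnn _)) => [//|[E C]].
exists (i1 + size u).+1; rewrite cnt_S C.
have -> : cond (st a (i1 + size u)).
  rewrite /cond -[(st _ _).2]/(cnt a _) C Hc andbT E take_size /splitb -!cats1 -!catA.
  by apply/andP; split; apply/decP.
by [].
Qed.

Lemma cnt_ivt a c n : c <= cnt a n -> exists i, cnt a i = c.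
Proof.
elim: n => [|n IH] h.
  by exists 0; apply/eqP; rewrite eqn_leq h.
case: (leqP c (cnt a n)) => [/IH //|lt]; exists n.+1; apply/eqP; rewrite eqn_leq h andbT.
by move: lt; rewrite cnt_S; case: ifP => _ // lt; apply: ltnW.
Qed.

Lemma cnt_exact a c : exists i, cnt a i = c.
Proof.
elim: c => [|c [i Ci]]; first by exists 0.
have [i' lt] := consume Ci; exact: cnt_ivt lt.
Qed.

Fixpoint allseq n : seq (seq bool) :=
  if n is n'.+1 then [seq true :: r | r <- allseq n'] ++ [seq false :: r | r <- allseq n']
  else [:: [::]].

Lemma allseqP n r : size r = n -> r \in allseq n.
Proof.
elim: n r => [|n IH] [|b r] //= [/IH h]; rewrite mem_cat.
by case: b; apply/orP; [left|right]; apply: map_f.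
Qed.

Lemma uniform j : exists P, forall a, j < cnt a P.
Proof.
have key : forall L : seq (seq bool), exists P, forall r, r \in L -> forall a : assignment,
    (forall k, k < j.+1 -> a k = nth false r k) -> j < cnt a P.
  elim=> [|r L [P HP]]; first by exists 0.
  have [i Ci] := cnt_exact (fun k => nth false r k) j.+1.
  exists (maxn i P) => r'; rewrite in_cons => /orP [/eqP -> a ag|/HP h a ag].
    have E : st (fun k => nth false r k) i = st a i.
      by apply: st_dep => k; rewrite Ci => /ag ->.
    apply: leq_trans (cnt_mono a (leq_maxl i P)).
    by rewrite /cnt -E -/(cnt _ i) Ci.
  by apply: leq_trans (h a ag) (cnt_mono a (leq_maxr i P)).
have [P HP] := key (allseq j.+1); exists P => a.
apply: (HP (map a (iota 0 j.+1))); first by apply: allseqP; rewrite size_map size_iota.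
by move=> k lt; rewrite nth_map_iota.
Qed.

Definition rts (i : nat) : term := mkterm i (fun a => bitf a i).

Lemma restr_rts a n : restr_eval rts a n = (st a n).1.
Proof. by rewrite st_map /restr_eval; apply: eq_map => i; rewrite teval_mkterm //; apply: bitf_dep. Qed.

Lemma rts_Sstar : in_Sstar rts.
Proof.
split=> [i|j]; first exact: mkterm_dep.
have [P HP] := uniform j; exists (iota 0 P) => a b Hab.
have E : (st a P).1 = (st b P).1.
  rewrite -!restr_rts; apply/restr_eqP => i lt; apply: Hab.
  by rewrite mem_iota add0n.
have [_ Hk] := st_inv E; exact: Hk.
Qed.

Lemma rts_Psi : (forall c, H c = 0) -> forall s, Psi rts s <-> T s.
Proof.
move=> H0 s; split=> [[n [a ->]]|Ts]; first by rewrite restr_rts; apply: st_T.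
by have [a Ea] := st_surj H0 Ts; exists (size s), a; rewrite restr_rts Ea.
Qed.

Lemma bound (f : nat -> nat) i : exists n, forall c, c <= i -> f c <= n.
Proof.
elim: i => [|i [n Hn]]; first by exists (f 0) => c; rewrite leqn0 => /eqP ->.
exists (maxn n (f i.+1)) => c; rewrite leq_eqVlt => /orP [/eqP ->|/Hn h].
  exact: leq_maxr.
exact: leq_trans h (leq_maxl _ _).
Qed.

Section Sub.
Variable ts : nat -> term.
Variable N : nat -> nat.
Hypothesis Hts : in_Sstar ts.
Hypothesis Hsub : forall s, T s -> Psi ts s.
Hypothesis HN : forall c, determined_by c ts (iota 0 (N c)).
Hypothesis HNH : forall c, N c <= H c.+1.

Lemma cnt_bound a : forall i c, i <= H c.+1 -> cnt a i <= c.+1.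
Proof.
elim=> // i IH c lt; have := IH c (ltnW lt); rewrite cnt_S.
case: ifP => // Cd h; move: Cd; rewrite /cond size_st -[(st a i).2]/(cnt a i) => /andP [_ C].
move: h; rewrite leq_eqVlt => /orP [/eqP Ce|//]; move: C; rewrite Ce => C.
by have := leq_trans lt C; rewrite ltnn.
Qed.

Definition G c (a : assignment) : bool :=
  epsilon (inhabits (fun _ : nat => false))
    (fun b : assignment => restr_eval ts b (N c) = (st a (N c)).1) c.

Lemma G_dep c : dep_le (G c) c.
Proof.
move=> a b ab; rewrite /G (st_dep (i := N c) (a := a) (b := b)) // => k lt; apply: ab.
rewrite -ltnS; exact: leq_trans lt (cnt_bound a (HNH c)).
Qed.

Definition phi c := mkterm c (G c).

Lemma central a i : teval (ts i) (fun c => G c a) = bitf a i.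
Proof.
have [n Hn] := bound N i; set m := maxn n i.+1.
have [m' [b' E']] := Hsub (st_T a m).
have Em : m' = m by rewrite -(size_st a m) E' size_restr.
rewrite Em -restr_rts in E'.
have hb : forall k, k < m -> teval (ts k) b' = bitf a k.
  move=> k lt; rewrite -(proj1 (restr_eq2P _ _ _ _ _) E' k lt).
  by rewrite teval_mkterm //; apply: bitf_dep.
have -> : teval (ts i) (fun c => G c a) = teval (ts i) b'; last first.
  by apply: hb; apply: leq_trans (leq_maxr _ _); rewrite ltnS.
apply: teval_dep ((proj1 Hts) i) _ => c ci.
have Nm : N c <= m by apply: leq_trans (Hn c ci) (leq_maxl _ _).
have wit : restr_eval ts b' (N c) = (st a (N c)).1.
  rewrite -restr_rts; apply/restr_eq2P => k lt.
  rewrite hb ?(leq_trans lt Nm) // teval_mkterm //; apply: bitf_dep.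
have he := epsilon_spec (inhabits (fun _ : nat => false))
  (fun b : assignment => restr_eval ts b (N c) = (st a (N c)).1) (ex_intro _ b' wit).
rewrite /G; set e := epsilon _ _ in he *.
apply: HN => k; rewrite mem_iota add0n => lt.
exact: (proj1 (restr_eqP _ _ _ _) (etrans he (esym wit)) k lt).
Qed.

Lemma phi_Sstar : in_Sstar phi.
Proof.
split=> [i|j]; first exact: mkterm_dep.
have [P HP] := uniform j; exists (iota 0 P) => a a' Hab.
have E : (st a P).1 = (st a' P).1.
  rewrite !st_map; apply/eq_in_map => i; rewrite mem_iota add0n => lt.
  rewrite -!central; apply: teval_dep ((proj1 Hts) i) _ => k ki.
  move: (Hab k); rewrite /phi !teval_mkterm ?mem_iota ?add0n ?leq0n; try exact: G_dep.
  by move=> h; apply: h; exact: leq_ltn_trans ki lt.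
have [_ Hk] := st_inv E; exact: Hk.
Qed.

Lemma rts_le : Sstar_le rts ts.
Proof.
exists phi; split; first exact: phi_Sstar.
move=> i a; rewrite teval_tsubst teval_mkterm; last exact: bitf_dep.
rewrite -central; apply: teval_dep ((proj1 Hts) i) _ => k _.
by rewrite teval_mkterm //; apply: G_dep.
Qed.

End Sub.

End Branch.



Lemma list_bound (F : seq nat) : exists n, forall x, x \in F -> x < n.
Proof.
elim: F => [|y F [n Hn]]; first by exists 0.
exists (maxn y.+1 n) => x; rewrite in_cons => /orP [/eqP ->|/Hn h].
  exact: leq_maxl.
exact: leq_trans h (leq_maxr _ _).
Qed.

Lemma getN ts : in_Sstar ts -> exists N : nat -> nat, forall c, determined_by c ts (iota 0 (N c)).
Proof.
move=> [_ Hdet].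
have h : forall c, exists n, determined_by c ts (iota 0 n).
  move=> c; have [F HF] := Hdet c; have [n Hn] := list_bound F.
  exists n => a b ab; apply: HF => i /Hn lt; apply: ab; by rewrite mem_iota add0n.
exists (fun c => proj1_sig (constructive_indefinite_description _ (h c))) => c.
exact: proj2_sig (constructive_indefinite_description _ (h c)).
Qed.

Theorem mainTheorem2 :
  (forall ts, in_Sstar ts -> perfect_tree (Psi ts)) /\
  (forall T, perfect_tree T ->
     exists ts, in_Sstar ts /\ forall s, Psi ts s <-> T s) /\
  (forall ts ts', in_Sstar ts -> in_Sstar ts' ->
     Sstar_le ts' ts -> Sacks_le (Psi ts') (Psi ts)) /\
  (forall ts ts', in_Sstar ts -> in_Sstar ts' ->
     Sstar_incompatible ts ts' -> Sacks_incompatible (Psi ts) (Psi ts')).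
Proof.
split; first exact: part1.
split.
  move=> T PT; exists (rts T (fun _ => 0)); split; first exact: rts_Sstar.
  exact: rts_Psi.
split.
  move=> ts ts' _ _ [phi [_ Hq]] s [n [a ->]].
  exists n, (fun v => teval (phi v) a); apply/restr_eq2P => i _.
  by rewrite Hq teval_tsubst.
move=> ts ts' H1 H2 Hinc [T [PT [S1 S2]]]; apply: Hinc.
have [N HN] := getN H1; have [N' HN'] := getN H2.
pose H := fun c => if c is c'.+1 then maxn (N c') (N' c') else 0.
exists (rts T H); split; first exact: rts_Sstar.
split.
  by apply: rts_le HN _ => // c; exact: leq_maxl.
by apply: rts_le HN' _ => // c; exact: leq_maxr.
Qed.
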